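(* Let $d_G$ be a generalized distance on graphs (for example the shortest-path distance), and consider graphs with at most $n$ nodes. A Powerful Plain Graph Transformer (PPGT) whose graph positional encoding is given by $d_G$ is as powerful as the GD-WL test with distance $d_G$ in distinguishing non-isomorphic graphs, i.e., for every pair of graphs with at most $n$ nodes that GD-WL distinguishes there is a PPGT that distinguishes them, provided the functions $\phi$ and $\theta$ in its attention are chosen appropriately and the numbers of attention heads and layers are sufficiently large.
   Context: Graphs $G=(\mathcal V,\mathcal E)$ are finite. A generalized distance assigns to every pair of nodes $u,v$ of a graph $G$ a value $d_G(u,v)$ (e.g. shortest-path distance, resistance distance), invariant under graph isomorphism. GD-WL test: starting from initial node colors $\chi^0_G(v)$, iterate $\chi^{\ell}_G(v)=\mathrm{hash}(\{\!\{(d_G(v,u),\chi^{\ell-1}_G(u)) : u\in\mathcal V\}\!\})$, where $\{\!\{\cdot\}\!\}$ denotes a multiset and hash is injective; after $L$ iterations the graph color is the hash of the multiset $\{\!\{\chi^L_G(v): v\in\mathcal V\}\!\}$. GD-WL distinguishes two graphs if their graph colors differ. PPGT: each node $i$ is a token $x_i\in\mathbb R^D$ (initialized from node attributes), and each node pair $(i,j)$ carries a relative positional embedding $p_{ij}$ computed from the positional encoding (here from $d_G(i,j)$) by an MLP-based stem. Each layer is a pre-norm Transformer block: $\hat X = X + \mathrm{MSA}(\mathrm{Norm}(X),P)$, $X' = \hat X + \mathrm{MLP}(\mathrm{Norm}(\hat X))$, where MLP is a two-layer perceptron and Norm is a token-wise normalization. In each head $h$ of the multihead self-attention MSA, with queries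 $q_i=W_Q^h x_i$, keys $k_j=W_K^h x_j$, values $W_V^h x_j$, the attention weights are $\alpha_{ij}=\phi^h(p_{ij})\cdot \mathrm{Softmax}_j\big(\tfrac{q_i^\top k_j}{\sqrt D}-\tfrac{k_j^\top k_j}{2\sqrt D}+\theta^h(p_{ij})\big)$, with $\mathrm{Softmax}_j(a_{ij})=\exp(a_{ij})/\sum_{j'}\exp(a_{ij'})$ over all nodes $j'$ of the graph, and the head output at node $i$ is $\sum_j \alpha_{ij} W_O^h W_V^h x_j$; head outputs are summed/concatenated. A graph-level output is obtained by sum pooling of final node representations followed by an MLP. A PPGT distinguishes two graphs if its graph-level outputs differ. *)

(* Defs.v *)
From HB Require Import structures.
From mathcomp Require Import all_boot all_order all_algebra.
From mathcomp Require Import reals sequences exp.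
Set Implicit Arguments. Unset Strict Implicit. Unset Printing Implicit Defensive.
Import Order.TTheory GRing.Theory Num.Theory.
Local Open Scope ring_scope.

Section PPGT.
Variable R : realType.

Record graph (N : nat) := Graph {
  adj : rel 'I_N;
  adj_sym : symmetric adj;
  adj_irr : irreflexive adj }.
Arguments adj {N} g _ _.

Definition graph_iso (N M : nat) (G : graph N) (H : graph M) (s : 'I_N -> 'I_M) :=
  bijective s /\ forall u v, adj H (s u) (s v) = adj G u v.

Definition gdist := forall N : nat, graph N -> 'I_N -> 'I_N -> R.

Definition is_gen_dist (d : gdist) :=
  forall N M (G : graph N) (H : graph M) (s : 'I_N -> 'I_M),
    graph_iso G H s -> forall u v, d M H (s u) (s v) = d N G u v.

Record agraph (k : nat) := AGraph {
  ag_n : nat;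
  ag_g : graph ag_n;
  ag_x : 'I_ag_n -> 'rV[R]_k }.
Arguments ag_x {k} a _.
Arguments ag_g {k} a.
Arguments ag_n {k} a.

(* wl_same d G1 G2 l u v  <->  chi^l_{G1}(u) = chi^l_{G2}(v).
   Since hash is injective, equal colors at level l+1 means equal multisets
   {{(d(u,w), chi^l(w)) : w}}, i.e. a bijection between node sets matching
   the pairs. *)
Fixpoint wl_same (d : gdist) (k : nat) (G1 G2 : agraph k) (l : nat)
    (u : 'I_(ag_n G1)) (v : 'I_(ag_n G2)) {struct l} : Prop :=
  match l with
  | 0 => ag_x G1 u = ag_x G2 v
  | l'.+1 => exists s : 'I_(ag_n G1) -> 'I_(ag_n G2),
      bijective s /\
      forall w, d _ (ag_g G1) u w = d _ (ag_g G2) v (s w) /\ wl_same d l' w (s w)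
  end.

Definition wl_graph_same (d : gdist) (k : nat) (G1 G2 : agraph k) (L : nat) :=
  exists s : 'I_(ag_n G1) -> 'I_(ag_n G2), bijective s /\ forall v, @wl_same d k G1 G2 L v (s v).

Definition gdwl_distinguishes (d : gdist) (k : nat) (G1 G2 : agraph k) :=
  exists L : nat, ~ wl_graph_same d G1 G2 L.

Definition relu_v (m : nat) (x : 'rV[R]_m) : 'rV[R]_m := map_mx (fun t => Num.max t 0) x.

Record mlp2 (a h b : nat) := MLP2 {
  mW1 : 'M[R]_(a, h); mb1 : 'rV[R]_h; mW2 : 'M[R]_(h, b); mb2 : 'rV[R]_b }.

Definition mlp_apply (a h b : nat) (f : mlp2 a h b) (x : 'rV[R]_a) : 'rV[R]_b :=
  relu_v (x *m mW1 f + mb1 f) *m mW2 f + mb2 f.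

Record lnorm (D : nat) := LNorm {
  ln_gamma : 'rV[R]_D; ln_beta : 'rV[R]_D; ln_eps : R; ln_eps_gt0 : 0 < ln_eps }.

Definition ln_apply (D : nat) (p : lnorm D) (x : 'rV[R]_D) : 'rV[R]_D :=
  let mu := (\sum_(i < D) x 0 i) / D%:R in
  let var := (\sum_(i < D) (x 0 i - mu) ^+ 2) / D%:R in
  \row_(i < D) ((x 0 i - mu) / Num.sqrt (var + ln_eps p) * ln_gamma p 0 i + ln_beta p 0 i).

(* one attention head: D model dim, Dp dim of relative PE, Dk key dim, Dv value dim *)
Record head (D Dp Dk Dv : nat) := Head {
  hWQ : 'M[R]_(D, Dk); hWK : 'M[R]_(D, Dk);
  hWV : 'M[R]_(D, Dv); hWO : 'M[R]_(Dv, D);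
  hphi : 'rV[R]_Dp -> R; htheta : 'rV[R]_Dp -> R }.

Definition dotr (m : nat) (x y : 'rV[R]_m) : R := (x *m y^T) 0 0.

Definition head_apply (D Dp Dk Dv N : nat) (hd : head D Dp Dk Dv)
    (Y : 'I_N -> 'rV[R]_D) (P : 'I_N -> 'I_N -> 'rV[R]_Dp) (i : 'I_N) : 'rV[R]_D :=
  let q := Y i *m hWQ hd in
  let key j := Y j *m hWK hd in
  let sD := Num.sqrt (D%:R : R) in
  let a j := dotr q (key j) / sD - dotr (key j) (key j) / (2 * sD) + htheta hd (P i j) in
  \sum_(j < N) ((hphi hd (P i j) * (expR (a j) / \sum_(j' < N) expR (a j')))
                  *: (Y j *m hWV hd *m hWO hd)).

Record layer (D Dp Dk Dv Dh : nat) := Layer {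
  lnorm1 : lnorm D;
  lheads : seq (head D Dp Dk Dv);
  lnorm2 : lnorm D;
  lffn : mlp2 D Dh D }.

Definition layer_apply (D Dp Dk Dv Dh N : nat) (ly : layer D Dp Dk Dv Dh)
    (P : 'I_N -> 'I_N -> 'rV[R]_Dp) (X : 'I_N -> 'rV[R]_D) : 'I_N -> 'rV[R]_D :=
  let Y i := ln_apply (lnorm1 ly) (X i) in
  let Xh i := X i + \sum_(hd <- lheads ly) head_apply hd Y P i in
  fun i => Xh i + mlp_apply (lffn ly) (ln_apply (lnorm2 ly) (Xh i)).

Record ppgt (k : nat) := PPGT {
  pD : nat; pDp : nat; pDk : nat; pDv : nat; pDh : nat;
  pDs : nat; pDr : nat; pDout : nat;
  pembed : 'M[R]_(k, pD);
  pstem : mlp2 1 pDs pDp;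
  players : seq (layer pD pDp pDk pDv pDh);
  preadout : mlp2 pD pDr pDout }.

Definition ppgt_output (d : gdist) (k : nat) (M : ppgt k) (G : agraph k) : 'rV[R]_(pDout M) :=
  let N := ag_n G in
  let P (i j : 'I_N) := mlp_apply (pstem M) (\row_(_ < 1) d N (ag_g G) i j) in
  let X0 (i : 'I_N) := ag_x G i *m pembed M in
  let XL := foldl (fun X ly => layer_apply ly P X) X0 (players M) in
  mlp_apply (preadout M) (\sum_(i < N) XL i).

Definition ppgt_distinguishes (d : gdist) (k : nat) (M : ppgt k) (G1 G2 : agraph k) :=
  ppgt_output d M G1 <> ppgt_output d M G2.

End PPGT.

(* Main.v *)
Require Import Defs.
From HB Require Import structures.
From mathcomp Require Import all_boot all_order all_algebra.
From mathcomp Require Import reals.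
From mathcomp Require Import reals sequences exp.
From mathcomp Require Import ring lra.
From mathcomp Require Import perm.
From Stdlib Require Import FunctionalExtensionality.
Set Implicit Arguments. Unset Strict Implicit. Unset Printing Implicit Defensive.

Module MP2.
Import Order.TTheory GRing.Theory Num.Theory.
Local Open Scope ring_scope.

Section Interp.
Variable R : realFieldType.
Definition relu (t : R) := Num.max t 0.
Lemma relu_pos t : 0 <= t -> relu t = t.
Proof. by move=> h; rewrite /relu; case: ler0P => // h'; apply/eqP; rewrite eq_le h' h. Qed.
Lemma relu_neg t : t <= 0 -> relu t = 0.
Proof. by move=> h; rewrite /relu; case: ler0P => // h'; move: (lt_le_trans h' h); rewrite ltxx. Qed.

Definition Fs (c0 : R) (ps : seq (R * R)) (y : R) := c0 + \sum_(p <- ps) p.1 * relu (y - p.2).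

Lemma sep (x0 : R) (xs : seq R) : x0 \notin xs -> exists2 del, 0 < del & forall x, x \in xs -> del <= `|x - x0|.
Proof.
elim: xs => [|a xs IH] /=; first by exists 1 => //.
rewrite in_cons negb_or => /andP [ha hx]; case: (IH hx) => del d0 hd.
exists (Num.min del `|a - x0|).
  by rewrite lt_min d0 normr_gt0 subr_eq0 eq_sym.
move=> x; rewrite in_cons => /orP [/eqP ->|hxs]; first by rewrite ge_min lexx orbT.
by rewrite ge_min hd.
Qed.

Definition hat (x0 del : R) := [:: (del^-1, x0 - del); (- (2 * del^-1), x0); (del^-1, x0 + del)].

Lemma Fs_cat c0 ps qs y : Fs c0 (ps ++ qs) y = Fs c0 ps y + Fs 0 qs y.
Proof. by rewrite /Fs big_cat /= add0r addrA. Qed.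

Lemma hat_at x0 del : 0 < del -> Fs 0 (hat x0 del) x0 = 1.
Proof.
move=> d0; rewrite /Fs /hat !big_cons big_nil /=.
rewrite (@relu_pos (x0 - (x0 - del))) ?(@relu_neg (x0 - x0)) ?(@relu_neg (x0 - (x0 + del))); try lra.
field; lra.
Qed.

Lemma hat_out x0 del y : 0 < del -> del <= `|y - x0| -> Fs 0 (hat x0 del) y = 0.
Proof.
move=> d0; rewrite /Fs /hat !big_cons big_nil /=.
case: (lerP 0 (y - x0)) => hs.
  rewrite ger0_norm // => h.
  rewrite (@relu_pos (y - (x0 - del))) ?(@relu_pos (y - x0)) ?(@relu_pos (y - (x0 + del))); try lra.
  all: try (field; lra).
rewrite ltr0_norm // => h.
rewrite (@relu_neg (y - (x0 - del))) ?(@relu_neg (y - x0)) ?(@relu_neg (y - (x0 + del))); try lra.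
Qed.

Lemma interp (f : R -> R) (xs : seq R) : exists c0 ps, (size ps <= 3 * size xs)%N /\ forall x, x \in xs -> Fs c0 ps x = f x.
Proof.
elim: xs => [|x0 xs [c0 [ps [hs hf]]]]; first by exists 0, [::].
case hin: (x0 \in xs).
  exists c0, ps; split; first by rewrite /= mulnS (leq_trans hs) // leq_addl.
  by move=> x; rewrite in_cons => /orP [/eqP ->|]; [exact: hf| exact: hf].
case: (sep (negbT hin)) => del d0 hd.
exists c0, (ps ++ [seq (p.1 * (f x0 - Fs c0 ps x0), p.2) | p <- hat x0 del]); split.
  by rewrite size_cat size_map /= mulnS addnC leq_add2l.
have sc y : Fs 0 [seq (p.1 * (f x0 - Fs c0 ps x0), p.2) | p <- hat x0 del] y = (f x0 - Fs c0 ps x0) * Fs 0 (hat x0 del) y.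
  rewrite /Fs !add0r big_map mulr_sumr; apply: eq_bigr => p _ /=; ring.
move=> x; rewrite Fs_cat sc in_cons => /orP [/eqP ->|hx].
  by rewrite hat_at // mulr1 addrC subrK.
by rewrite hat_out ?hd // mulr0 addr0 hf.
Qed.
End Interp.

End MP2.
Import MP2.

Module MP1.
Import Order.TTheory GRing.Theory Num.Theory.
Local Open Scope ring_scope.

Section Basics.
Variable R : realType.
Definition ev : 'rV[R]_2 := \row_(i < 2) (if i == ord0 then 1 else -1).
Definition sgm (z : R) := z / Num.sqrt (z ^+ 2 + 1).
Definition siginv (y : R) := y / Num.sqrt (1 - y ^+ 2).

Lemma sqrt_invsq (s : R) : 0 < s -> Num.sqrt (s^-1 ^+ 2) = s^-1.
Proof. by move=> s0; rewrite sqrtr_sqr gtr0_norm // invr_gt0. Qed.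

Lemma sigK : cancel sgm siginv.
Proof.
move=> z; rewrite /siginv /sgm.
set s := Num.sqrt (z ^+ 2 + 1).
have s0 : 0 < s by rewrite sqrtr_gt0; apply: ltr_wpDl; [exact: sqr_ge0|exact: ltr01].
have ss : s ^+ 2 = z ^+ 2 + 1 by rewrite sqr_sqrtr // addr_ge0 // sqr_ge0.
have -> : 1 - (z / s) ^+ 2 = s^-1 ^+ 2.
  have zz : z ^+ 2 = s ^+ 2 - 1 by rewrite ss; ring.
  rewrite expr_div_n zz; field; exact: lt0r_neq0.
rewrite sqrt_invsq //; field; exact: lt0r_neq0.
Qed.

Lemma siginvK y : `|y| < 1 -> sgm (siginv y) = y.
Proof.
move=> y1; rewrite /siginv /sgm.
set s := Num.sqrt (1 - y ^+ 2).
have y2 : 0 < 1 - y ^+ 2.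
  by rewrite subr_gt0 -real_normK ?num_real // exprn_ilt1 // normr_ge0.
have s0 : 0 < s by rewrite sqrtr_gt0.
have ss : s ^+ 2 = 1 - y ^+ 2 by rewrite sqr_sqrtr // ltW.
have -> : (y / s) ^+ 2 + 1 = s^-1 ^+ 2.
  have yy : y ^+ 2 = 1 - s ^+ 2 by rewrite ss; ring.
  rewrite expr_div_n yy; field; exact: lt0r_neq0.
rewrite sqrt_invsq //; field; exact: lt0r_neq0.
Qed.

Lemma ev0 : ev 0 ord0 = 1. Proof. by rewrite mxE. Qed.
Lemma ev1 : ev 0 (@Ordinal 2 1 isT) = -1. Proof. by rewrite mxE. Qed.

Definition lnp : lnorm R 2 := @LNorm R 2 (const_mx 1) 0 1 ltr01.

Lemma ln_ev z : ln_apply lnp (z *: ev) = sgm z *: ev.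
Proof.
rewrite /ln_apply /=.
rewrite !big_ord_recr !big_ord0 /= !mxE /= !add0r.
have -> : (z * 1 + z * -1) = 0 by ring.
rewrite mul0r !subr0.
have -> : ((z * 1) ^+ 2 + (z * -1) ^+ 2) / 2 = z ^+ 2 by field.
apply/matrixP => i j; rewrite !mxE /= /sgm.
rewrite mulr1 addr0.
by rewrite subr0 mulrAC.
Qed.
End Basics.
Arguments sgm {R}.
Arguments siginv {R}.

End MP1.
Import MP1.

Module MP3.
Import Order.TTheory GRing.Theory Num.Theory.
Local Open Scope ring_scope.

Section Mats.
Variable R : realType.
Local Notation ev := (ev R).

Definition mkffn H (c0 : R) (c t : 'I_H -> R) : mlp2 R 2 H 2 :=
  MLP2 (\matrix_(i < 2, j < H) (if i == ord0 then 1 else 0)) (\row_j (- t j))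
       (\matrix_(j < H, i < 2) (c j * ev 0 i)) (c0 *: ev).

Lemma mlp_ev H c0 c t y : mlp_apply (@mkffn H c0 c t) (y *: ev) =
   (c0 + \sum_(j < H) c j * relu (y - t j)) *: ev.
Proof.
apply/matrixP => i k; rewrite !mxE /=.
under eq_bigr => j _ do rewrite !mxE /= !big_ord_recr big_ord0 /= !mxE /=.
rewrite mulrDl addrC mulr_suml; congr (_ + _).
apply: eq_bigr => j _; rewrite /relu.
have -> : (0 + y * 1 * 1 + y * -1 * 0 + - t j) = y - t j by ring.
ring.
Qed.

Lemma interpH (f : R -> R) (xs : seq R) H : (3 * size xs <= H)%N ->
  exists c0 (c t : 'I_H -> R), forall x, x \in xs -> c0 + \sum_(j < H) c j * relu (x - t j) = f x.
Proof.
move=> hH; case: (interp f xs) => c0 [ps [hs hf]].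
set qs := ps ++ nseq (H - size ps) (0, 0).
have sq : size qs = H by rewrite size_cat size_nseq subnKC // (leq_trans hs).
exists c0, (fun j => (nth (0,0) qs j).1), (fun j => (nth (0,0) qs j).2) => x hx.
rewrite -(hf x hx) /Fs; congr (_ + _).
rewrite -(big_mkord xpredT (fun j => (nth (0,0) qs j).1 * relu (x - (nth (0,0) qs j).2))).
rewrite -{1}sq -(big_nth (0,0) xpredT (fun p => p.1 * relu (x - p.2))) /qs big_cat /=.
rewrite [X in _ + X]big1_seq ?addr0 // => p /andP [_ /nseqP [-> _]] /=; ring.
Qed.

Definition mkstem : mlp2 R 1 2 1 :=
  MLP2 (\row_(j < 2) (if j == ord0 then 1 else -1)) 0 (\col_(j < 2) (if j == ord0 then 1 else -1)) 0.

Lemma stem_ev (a : R) : mlp_apply mkstem (\row_(_ < 1) a) 0 0 = a.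
Proof.
rewrite !mxE !big_ord_recr big_ord0 /= !mxE /= !big_ord_recr big_ord0 /= !mxE /=.
rewrite !big_ord0 !add0r !addr0 !mulr1 !mulrN1.
have rl t : Num.max t 0 = relu t by [].
rewrite !rl; case: (lerP 0 a) => h.
  by rewrite (@relu_pos _ a) // (@relu_neg _ (-a)) ?subr0 // oppr_le0.
rewrite (@relu_neg _ a) ?(@relu_pos _ (-a)) ?opprK ?sub0r //; try lra.
Qed.
End Mats.

End MP3.
Import MP3.

Module MP4.
Import Order.TTheory GRing.Theory Num.Theory.
Local Open Scope ring_scope.

Section Heads.
Variable R : realType.
Local Notation ev := (ev R).

Definition WV : 'M[R]_(2, 1) := \matrix_(i < 2, j < 1) (if i == ord0 then 1 else 0).
Definition mkhead (Phi : R -> R) : Defs.head R 2 1 1 1 :=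
  @Defs.Head R 2 1 1 1 0 0 WV ev (fun p => Phi (p 0 0)) (fun _ => 0).

Lemma evWV : ev *m WV *m ev = ev.
Proof.
apply/matrixP => i j; rewrite !mxE big_ord1 !mxE !big_ord_recr big_ord0 /= !mxE /=; ring.
Qed.

Lemma head_ev N Phi (y : 'I_N -> R) (P : 'I_N -> 'I_N -> 'rV[R]_1) i : (0 < N)%N ->
  head_apply (mkhead Phi) (fun j => y j *: ev) P i =
  (\sum_(j < N) Phi (P i j 0 0) * y j / N%:R) *: ev.
Proof.
move=> N0; rewrite /head_apply /= /dotr.
have z0 (v : 'rV[R]_2) : v *m (0 : 'M[R]_(2,1)) = 0 by rewrite mulmx0.
have ex (v : 'rV[R]_2) : expR ((0 *m (v *m (0 : 'M[R]_(2,1)))^T) 0 0 / Num.sqrt 2 -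
    (v *m (0 : 'M[R]_(2,1)) *m (v *m (0 : 'M[R]_(2,1)))^T) 0 0 / (2 * Num.sqrt 2) + 0) = 1.
  by rewrite mulmx0 trmx0 !mul0mx !mxE !mul0r subr0 addr0 expR0.
rewrite !z0 scaler_suml; apply: eq_bigr => j _.
under eq_bigr => j' _ do rewrite ex.
rewrite ex sumr_const card_ord.
rewrite -!scalemxAl evWV scalerA; congr (_ *: _).
field; by rewrite pnatr_eq0 -lt0n.
Qed.

Definition mkLayer H (hs : seq (Defs.head R 2 1 1 1)) (f : mlp2 R 2 H 2) : layer R 2 1 1 1 H :=
  @Layer R 2 1 1 1 H (lnp R) hs (lnp R) f.

Lemma layer_ev N H hs c0 (c t : 'I_H -> R) (P : 'I_N -> 'I_N -> 'rV[R]_1) (z A : 'I_N -> R) :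
  (forall i, \sum_(hd <- hs) head_apply hd (fun j => sgm (z j) *: ev) P i = A i *: ev) ->
  layer_apply (mkLayer hs (mkffn c0 c t)) P (fun i => z i *: ev) =
  (fun i => (z i + A i + (c0 + \sum_(j < H) c j * relu (sgm (z i + A i) - t j))) *: ev).
Proof.
move=> hA; apply: functional_extensionality => i.
rewrite /layer_apply /=.
have -> : (fun i => ln_apply (lnp R) (z i *: ev)) = (fun j => sgm (z j) *: ev).
  by apply: functional_extensionality => j; rewrite ln_ev.
by rewrite hA -scalerDl ln_ev mlp_ev -scalerDl.
Qed.

End Heads.

End MP4.
Import MP4.

Module MP5.

Section Digits.
Variable B : nat.
Hypothesis B0 : (0 < B)%N.

Definition sh (s : seq nat) := [seq x.-1 | x <- s & (0 < x)%N].

Lemma sum_sh s : \sum_(x <- s) B ^ x = count_mem 0%N s + B * \sum_(x <- sh s) B ^ x.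
Proof.
elim: s => [|x s IH]; first by rewrite /sh /= !big_nil muln0.
rewrite big_cons IH /sh /=; case: x => [|x] /=.
  by rewrite expn0 addnA add1n.
by rewrite big_cons /= add0n expnS mulnDr addnCA.
Qed.

Lemma shc x s : sh (x :: s) = if (0 < x)%N then x.-1 :: sh s else sh s.
Proof. by rewrite /sh /=; case: ifP. Qed.

Lemma count_sh e s : count_mem e.+1 s = count_mem e (sh s).
Proof.
elim: s => [|x s IH]; first by [].
rewrite shc; case: x => [|x].
  by rewrite /= IH.
by rewrite /= IH eqSS.
Qed.

Lemma size_sh s : (size (sh s) <= size s)%N.
Proof. by rewrite /sh size_map size_filter count_size. Qed.

Lemma digits_count e : forall s t : seq nat, (size s < B)%N -> (size t < B)%N ->
  \sum_(x <- s) B ^ x = \sum_(x <- t) B ^ x -> count_mem e s = count_mem e t.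
Proof.
elim: e => [|e IH] s t hs ht; rewrite (sum_sh s) (sum_sh t) => E.
- have cs : (count_mem 0%N s < B)%N by apply: leq_ltn_trans (count_size _ _) hs.
  have ct : (count_mem 0%N t < B)%N by apply: leq_ltn_trans (count_size _ _) ht.
  move: (congr1 (modn^~ B) E); rewrite ![B * _]mulnC !(addnC (count_mem _ _)).
  by rewrite !modnMDl !modn_small.
- have cs : (count_mem 0%N s < B)%N by apply: leq_ltn_trans (count_size _ _) hs.
  have ct : (count_mem 0%N t < B)%N by apply: leq_ltn_trans (count_size _ _) ht.
  move: (congr1 (divn^~ B) E); rewrite ![B * _]mulnC !(addnC (count_mem _ _)).
  rewrite !divnMDl // !divn_small // !addn0 => E'.
  rewrite !count_sh; apply: IH E'.
    exact: leq_ltn_trans (size_sh s) hs.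
  exact: leq_ltn_trans (size_sh t) ht.
Qed.

Lemma digits (s t : seq nat) : (size s < B)%N -> (size t < B)%N ->
  \sum_(x <- s) B ^ x = \sum_(x <- t) B ^ x -> perm_eq s t.
Proof.
move=> hs ht E; apply/allP => x _ /=; apply/eqP; exact: digits_count.
Qed.
End Digits.

Lemma perm_bij (T : eqType) N (f g : 'I_N -> T) :
  perm_eq [seq f i | i <- enum 'I_N] [seq g i | i <- enum 'I_N] ->
  exists s : 'I_N -> 'I_N, bijective s /\ forall i, g (s i) = f i.
Proof.
rewrite -val_ord_tuple => /(@tuple_permP T N _ [tuple g i | i < N]) [p E].
exists p; split; first by apply: injF_bij; exact: perm_inj.
move=> i.
have E' : [tuple f i | i < N] = [tuple tnth [tuple g i | i < N] (p i) | i < N] by apply: val_inj.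
move: (congr1 (fun t => tnth t i) E'); rewrite !tnth_mktuple => ->; by [].
Qed.

Lemma sum_enum B N (f : 'I_N -> nat) : \sum_(i < N) B ^ f i = \sum_(x <- [seq f i | i <- enum 'I_N]) B ^ x.
Proof. by rewrite big_map big_enum. Qed.

End MP5.
Import MP5.

Module MP6.
Import Order.TTheory GRing.Theory Num.Theory.
Local Open Scope ring_scope.

Section SepDir.
Variable R : numFieldType.

Lemma nonroot (q : {poly R}) : q != 0 -> exists t, ~~ root q t.
Proof.
move=> q0; set rs := [seq i%:R : R | i <- iota 0 (size q)].
case: (boolP (all (root q) rs)) => h.
  have u : uniq rs.
    rewrite map_inj_uniq ?iota_uniq // => m n /eqP; rewrite eqr_nat => /eqP.
    done.
  by move: (max_poly_roots q0 h u); rewrite size_map size_iota ltnn.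
by case/allPn: h => t _ ht; exists t.
Qed.

Definition pd k (x y : 'rV[R]_k) : {poly R} := \poly_(i < k) oapp (fun j : 'I_k => (x - y) 0 j) 0 (insub i).

Lemma pd_neq0 k (x y : 'rV[R]_k) : x != y -> pd x y != 0.
Proof.
move=> nxy; apply/negP => /eqP h; move/negP: nxy; apply; apply/eqP.
apply/rowP => i; apply/eqP; rewrite -subr_eq0.
have := congr1 (fun p : {poly R} => p`_i) h; rewrite coef_poly ltn_ord coef0 valK /= !mxE => ->.
by [].
Qed.

Lemma pd_horner k (x y : 'rV[R]_k) t :
  (pd x y).[t] = ((x - y) *m \col_(i < k) t ^+ i) 0 0.
Proof. by rewrite horner_poly !mxE; apply: eq_bigr => i _; rewrite valK /= !mxE. Qed.

Lemma sepdir k (xs : seq 'rV[R]_k) : exists w : 'cV[R]_k,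
  forall x y, x \in xs -> y \in xs -> (x *m w) 0 0 = (y *m w) 0 0 -> x = y.
Proof.
set q := \prod_(pr <- [seq (x, y) | x <- xs, y <- xs] | pr.1 != pr.2) pd pr.1 pr.2.
have q0 : q != 0.
  rewrite prodf_seq_neq0; apply/allP => pr _ /=; apply/implyP; exact: pd_neq0.
case: (nonroot q0) => t ht; exists (\col_(i < k) t ^+ i) => x y hx hy E.
apply/eqP; apply/negPn/negP => nxy.
move: ht; rewrite /root /q horner_prod prodf_seq_neq0 => /allP /(_ (x, y)).
rewrite allpairs_f // => /(_ isT) /= /implyP /(_ nxy).
by rewrite pd_horner mulmxBl mxE E !mxE addrN eqxx.
Qed.
End SepDir.

End MP6.
Import MP6.

Module MP7.
Import Order.TTheory GRing.Theory Num.Theory.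
Local Open Scope ring_scope.

Lemma aux_close (R : realType) (x y p q : R) : 0 <= x < 1 -> 0 <= y < 1 -> x + p = y + q -> p + 1 <= q -> False.
Proof. move=> /andP [? ?] /andP [? ?] ? ?; lra. Qed.

Lemma nat_close_gen (R : realType) : forall (m n : nat) (x y : R), 0 <= x < 1 -> 0 <= y < 1 -> x + m%:R = y + n%:R -> m = n.
Proof.
move=> m n x y hx hy E.
case: (ltngtP m n) => // h.
  exfalso; apply: (aux_close hx hy E); by rewrite natr1 ler_nat.
exfalso; apply: (aux_close hy hx (esym E)); by rewrite natr1 ler_nat.
Qed.

Section RO.
Variable R : realType.
Definition mkro : mlp2 R 2 1 1 := MLP2 (\col_(i < 2) (if i == ord0 then 1 else 0)) 0 1 0.
Lemma ro_ev (S : R) : mlp_apply mkro (S *: ev R) = \row_(_ < 1) relu S.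
Proof.
apply/matrixP => i j; rewrite !mxE big_ord1 !mxE !big_ord_recr big_ord0 /= !mxE /=.
rewrite !add0r !addr0 !ord1 eqxx mulr1 /relu.
by rewrite !mulr1 !mulr0 addr0.
Qed.

Lemma size_dist (d : gdist R) k (G1 G2 : agraph R k) : ag_n G1 != ag_n G2 ->
  exists M : ppgt R k, ppgt_distinguishes d M G1 G2.
Proof.
move=> ne.
set ly := mkLayer [::] (@mkffn R 1 1 (fun _ => 0) (fun _ => 0)).
exists (PPGT (0 : 'M[R]_(k, 2)) (mkstem R) [:: ly] mkro).
have out (G : agraph R k) : ppgt_output d (PPGT (0 : 'M[R]_(k, 2)) (mkstem R) [:: ly] mkro) G = \row_(_ < 1) relu (ag_n G)%:R.
  set P := fun i j => mlp_apply (mkstem R) (\row_(_ < 1) d (ag_n G) (ag_g G) i j).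
  have -> : ppgt_output d (PPGT (0 : 'M[R]_(k, 2)) (mkstem R) [:: ly] mkro) G =
    mlp_apply mkro (\sum_(i < ag_n G) layer_apply ly P (fun i => @ag_x R k G i *m (0 : 'M[R]_(k, 2))) i) by [].
  have -> : (fun i => @ag_x R k G i *m (0 : 'M[R]_(k, 2))) = (fun i => (fun _ => 0) i *: ev R).
    by apply: functional_extensionality => i; rewrite mulmx0 scale0r.
  have hA : forall i, \sum_(hd <- ([::] : seq (Defs.head R 2 1 1 1))) head_apply hd (fun j => sgm ((fun _ => 0) j) *: ev R) P i = (fun _ => 0) i *: ev R.
    by move=> i; rewrite big_nil scale0r.
  rewrite (@layer_ev R _ 1 [::] 1 (fun _ => 0) (fun _ => 0) P (fun _ => 0) (fun _ => 0) hA).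
  have inner : \sum_(j < 1) 0 * relu (sgm (0 + 0) - 0) = 0 :> R by rewrite big_ord1 mul0r.
  by rewrite -scaler_suml ro_ev inner !addr0 !add0r sumr_const card_ord.
rewrite /ppgt_distinguishes !out => /matrixP /(_ 0 0); rewrite !mxE.
rewrite !relu_pos ?ler0n // => /eqP; rewrite eqr_nat; apply/negP; exact: ne.
Qed.
End RO.

Section Main.
Variable R : realType.
Variable d : gdist R.
Variables (k N : nat) (g1 g2 : graph N) (x1 x2 : 'I_N -> 'rV[R]_k).
Hypothesis N0 : (0 < N)%N.
Local Notation ev := (ev R).
Definition gg (b : bool) := if b then g1 else g2.
Definition xb (b : bool) := if b then x1 else x2.
Definition Db b (u w : 'I_N) := @d N (gg b) u w.
Definition Pb b (i j : 'I_N) := mlp_apply (mkstem R) (\row_(_ < 1) @d N (gg b) i j).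
Definition B := N.+1.
Definition H := (6 * N)%N.
Definition allv (T : Type) (f : bool -> 'I_N -> T) := [seq f p.1 p.2 | p <- enum {: bool * 'I_N}].
Lemma allv_mem (T : eqType) (f : bool -> 'I_N -> T) b u : f b u \in allv f.
Proof. by apply: (map_f (fun p => f p.1 p.2) (x := (b,u))); rewrite mem_enum. Qed.
Lemma allv_size T (f : bool -> 'I_N -> T) : size (allv f) = (2 * N)%N.
Proof. by rewrite size_map -cardE card_prod card_bool card_ord. Qed.
Definition Ds := [seq Db p.1 p.2.1 p.2.2 | p <- enum {: bool * ('I_N * 'I_N)}].
Lemma Ds_mem b u w : Db b u w \in Ds.
Proof. by apply: (map_f (fun p => Db p.1 p.2.1 p.2.2) (x := (b,(u,w)))); rewrite mem_enum. Qed.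

Definition rho C : R := (2 * (B%:R) ^+ C)^-1.
Definition tau C c := siginv (rho C * (B%:R) ^+ c).
Lemma B_gt0 : (0 : R) < B%:R. Proof. by rewrite ltr0n. Qed.
Lemma rho_gt0 C : 0 < rho C.
Proof. by rewrite invr_gt0 mulr_gt0 // exprn_gt0 // B_gt0. Qed.
Lemma code_bound C c : (c < C)%N -> 0 < rho C * B%:R ^+ c <= 2^-1.
Proof.
move=> cC; rewrite mulr_gt0 ?rho_gt0 ?exprn_gt0 ?B_gt0 //=.
have hB : (B%:R : R) ^+ c <= B%:R ^+ C.
  by rewrite -!natrX ler_nat leq_exp2l // ltnW.
have p : (0 : R) < B%:R ^+ C by rewrite exprn_gt0 // B_gt0.
rewrite /rho invfM.
set a := (B%:R : R) ^+ c in hB *; set b := (B%:R : R) ^+ C in hB p *.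
have -> : 2^-1 * b^-1 * a = 2^-1 * (a / b) by ring.
rewrite ler_piMr ?invr_ge0 ?ler0n //.
by rewrite ler_pdivrMr // mul1r.
Qed.
Lemma sig_tau C c : (c < C)%N -> sgm (tau C c) = rho C * B%:R ^+ c.
Proof.
move=> /code_bound /andP [h1 h2]; rewrite siginvK // ger0_norm ?ltW //.
apply: le_lt_trans h2 _; lra.
Qed.
Lemma tau_range C c : (c < C)%N -> 0 <= tau C c < 1.
Proof.
move=> /code_bound /andP [h1 h2]; rewrite /tau /siginv.
set y := rho C * _ in h1 h2 *.
have y2 : 0 < 1 - y ^+ 2 by nra.
have s0 : 0 < Num.sqrt (1 - y ^+ 2) by rewrite sqrtr_gt0.
have ss : Num.sqrt (1 - y ^+ 2) ^+ 2 = 1 - y ^+ 2 by rewrite sqr_sqrtr // ltW.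
rewrite divr_ge0 ?ltW //= ltr_pdivrMr // mul1r.
set s := Num.sqrt _ in s0 ss *; nra.
Qed.
Lemma tau_inj C c1 c2 : (c1 < C)%N -> (c2 < C)%N -> tau C c1 = tau C c2 -> c1 = c2.
Proof.
move=> h1 h2 E; move: (congr1 sgm E); rewrite !sig_tau // => /mulfI.
move=> /(_ (lt0r_neq0 (rho_gt0 C))) /eqP; rewrite -!natrX eqr_nat eqn_exp2l //; first by move/eqP.
Qed.

Lemma X1_ev (m : 'M[R]_(1,1)) : m *m ev = m 0 0 *: ev.
Proof. by rewrite {1}[m]mx11_scalar mul_scalar_mx. Qed.

Lemma recolor (hs : seq (Defs.head R 2 1 1 1)) (z A : bool -> 'I_N -> R) (g : R -> R) :
  (forall b i, \sum_(hd <- hs) head_apply hd (fun j => sgm (z b j) *: ev) (Pb b) i = A b i *: ev) ->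
  exists ly : layer R 2 1 1 1 H, forall b,
    layer_apply ly (Pb b) (fun i => z b i *: ev) = (fun i => g (z b i + A b i) *: ev).
Proof.
move=> hA.
have hs3 : (3 * size (allv (fun b i => sgm (z b i + A b i))) <= H)%N by rewrite allv_size /H mulnA.
case: (interpH (fun y => g (siginv y) - siginv y) hs3) => c0 [c [t ht]].
exists (mkLayer hs (mkffn c0 c t)) => b.
rewrite (@layer_ev R N H hs c0 c t (Pb b) (z b) (A b) (hA b)).
apply: functional_extensionality => i; congr (_ *: _).
rewrite (ht _ (allv_mem (fun b i => sgm (z b i + A b i)) b i)) sigK; ring.
Qed.



Lemma decomp C i1 i2 c1 c2 : (c1 < C)%N -> (c2 < C)%N -> (C * i1 + c1 = C * i2 + c2)%N -> i1 = i2 /\ c1 = c2.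
Proof.
move=> h1 h2 E; have C0 : (0 < C)%N by apply: leq_ltn_trans h1.
rewrite ![(C * _)%N]mulnC in E; split.
  by move: (congr1 (divn^~ C) E) => /=; rewrite !divnMDl // !divn_small // !addn0.
by move: (congr1 (modn^~ C) E) => /=; rewrite !modnMDl !modn_small.
Qed.

Definition GA b : agraph R k := @AGraph R k N (gg b) (xb b).

Section Build.
Variable w : 'cV[R]_k.
Hypothesis hw : forall x y, x \in allv xb -> y \in allv xb -> (x *m w) 0 0 = (y *m w) 0 0 -> x = y.
Definition X0 b := fun u => xb b u *m (w *m ev).

Lemma build l : exists (ls : seq (layer R 2 1 1 1 H)) (kap : bool -> 'I_N -> nat) (C : nat),
 [/\ forall b u, (kap b u < C)%N,
     forall b, foldl (fun X ly => layer_apply ly (Pb b) X) (X0 b) ls = (fun u => tau C (kap b u) *: ev)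
   & forall u v, kap true u = kap false v -> @wl_same R (@d) k (GA true) (GA false) l u v].
Proof.
elim: l => [|l [ls [kap [C [hb hf hinv]]]]].
- set z0 := fun b u => (xb b u *m w) 0 0.
  have hX : forall b, X0 b = fun u => z0 b u *: ev.
    by move=> b; apply: functional_extensionality => u; rewrite /X0 mulmxA X1_ev.
  have hA : forall b i, \sum_(hd <- ([::] : seq (Defs.head R 2 1 1 1))) head_apply hd (fun j => sgm (z0 b j) *: ev) (Pb b) i = (fun _ _ => 0) b i *: ev.
    by move=> b i; rewrite big_nil scale0r.
  case: (recolor (fun x => tau (size (allv z0)) (index x (allv z0))) hA) => ly hly.
  exists [:: ly], (fun b u => index (z0 b u) (allv z0)), (size (allv z0)); split.
  + by move=> b u; rewrite index_mem allv_mem.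
  + by move=> b /=; rewrite hX hly; apply: functional_extensionality => u; rewrite addr0.
  + move=> u v /= /(index_inj 0 (allv_mem z0 true u) (allv_mem z0 false v)) E.
    exact: (hw (allv_mem xb true u) (allv_mem xb false v) E).
- set t := fun b u => tau C (kap b u).
  set a := fun b u => (\sum_(j < N) B ^ (C * index (Db b u j) Ds + kap b j))%N.
  set Phi := fun x : R => N%:R / rho C * B%:R ^+ (C * index x Ds).
  have hA : forall b i, \sum_(hd <- [:: mkhead Phi]) head_apply hd (fun j => sgm (t b j) *: ev) (Pb b) i = (fun b u => (a b u)%:R) b i *: ev.
    move=> b i; rewrite big_seq1 head_ev //; congr (_ *: _).
    rewrite /a natr_sum; apply: eq_bigr => j _.
    rewrite /Pb stem_ev /t sig_tau // /Phi natrX exprD -/(Db b i j).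
    field; apply/andP; split; [by rewrite pnatr_eq0 -lt0n | exact: lt0r_neq0 (rho_gt0 C)].
  set zh := fun b u => t b u + (a b u)%:R.
  case: (recolor (fun x => tau (size (allv zh)) (index x (allv zh))) hA) => ly hly.
  exists (rcons ls ly), (fun b u => index (zh b u) (allv zh)), (size (allv zh)); split.
  + by move=> b u; rewrite index_mem allv_mem.
  + by move=> b; rewrite foldl_rcons hf hly.
  + move=> u v /= /(index_inj 0 (allv_mem zh true u) (allv_mem zh false v)) E.
    have ea : a true u = a false v.
      apply: (nat_close_gen _ _ E); exact: tau_range.
    move: ea; rewrite /a (sum_enum B (fun j => C * index (Db true u j) Ds + kap true j)%N).
    rewrite (sum_enum B (fun j => C * index (Db false v j) Ds + kap false j)%N) => ea.
    have sz (f : 'I_N -> nat) : (size [seq f i | i <- enum 'I_N] < B)%N by rewrite size_map size_enum_ord.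
    move: (@digits B (ltn0Sn N) _ _ (sz _) (sz _) ea).
    case/perm_bij => s [sb hs]; exists s; split => // j.
    case: (decomp (hb _ _) (hb _ _) (hs j)) => /esym ei /esym ek; split.
      exact: (index_inj 0 (Ds_mem true u j) (Ds_mem false v (s j)) ei).
    exact: hinv.
Qed.
End Build.

Lemma main_eq L : ~ @wl_graph_same R (@d) k (GA true) (GA false) L ->
  exists M : ppgt R k, ppgt_distinguishes (@d) M (GA true) (GA false).
Proof.
move=> hnot.
case: (sepdir (allv xb)) => w hw.
case: (build hw L) => ls [kap [C [hb hf hinv]]].
set t := fun b u => tau C (kap b u).
have hA : forall b i, \sum_(hd <- ([::] : seq (Defs.head R 2 1 1 1))) head_apply hd (fun j => sgm (t b j) *: ev) (Pb b) i = (fun _ _ => 0) b i *: ev.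
  by move=> b i; rewrite big_nil scale0r.
case: (recolor (fun x => ((B ^ index x (allv t))%N)%:R) hA) => lyf hlyf.
exists (PPGT (w *m ev) (mkstem R) (rcons ls lyf) (mkro R)).
have out b : ppgt_output (@d) (PPGT (w *m ev) (mkstem R) (rcons ls lyf) (mkro R)) (GA b) =
    \row_(_ < 1) relu (\sum_(u < N) ((B ^ index (t b u) (allv t))%N)%:R).
  have -> : ppgt_output (@d) (PPGT (w *m ev) (mkstem R) (rcons ls lyf) (mkro R)) (GA b) =
     mlp_apply (mkro R) (\sum_(i < N) foldl (fun X ly => layer_apply ly (Pb b) X) (X0 w b) (rcons ls lyf) i) by [].
  rewrite foldl_rcons hf hlyf -scaler_suml ro_ev.
  by under eq_bigr => u _ do rewrite addr0.
rewrite /ppgt_distinguishes !out => /matrixP /(_ 0 0); rewrite !mxE.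
rewrite !relu_pos ?sumr_ge0 // -!natr_sum => /eqP; rewrite eqr_nat => /eqP.
rewrite !(sum_enum B (fun u => index (t _ u) (allv t))) => ea.
have sz (f : 'I_N -> nat) : (size [seq f i | i <- enum 'I_N] < B)%N by rewrite size_map size_enum_ord.
move: (@digits B (ltn0Sn N) _ _ (sz _) (sz _) ea).
case/perm_bij => s [sb hs]; apply: hnot; exists s; split => // u.
apply: hinv; apply: (tau_inj (hb _ _) (hb _ _)).
exact: (index_inj 0 (allv_mem t true u) (allv_mem t false (s u)) (esym (hs u))).
Qed.
End Main.

End MP7.
Import MP7.

Theorem proposition1 (R : realType) (d : gdist R) (n k : nat) :
  is_gen_dist d ->
  forall G1 G2 : agraph R k,
    (ag_n G1 <= n)%N -> (ag_n G2 <= n)%N ->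
    gdwl_distinguishes d G1 G2 ->
    exists M : ppgt R k, ppgt_distinguishes d M G1 G2.
Proof.
move=> _ G1 G2 _ _ [L hL].
case: (eqVneq (ag_n G1) (ag_n G2)) => [e|ne]; last exact: size_dist.
case: G1 G2 e hL => [n1 g1 x1] [n2 g2 x2] /= e hL; subst n2.
case: (posnP n1) => [n0|npos].
  subst n1; exfalso; apply: hL; exists id; split; first by exists id.
  by case.
exact: (@main_eq R d k n1 g1 g2 x1 x2 npos L hL).
Qed.
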